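(* Let $\mathcal{D}$ be a collection of random variables on $\Omega$ containing all constants, with coherent$_1$ marginal previsions $P(\cdot)$. Let $\mathcal{L}$ be the linear span of all functions of the form $XB$ with $X\in\mathcal{D}$ and $B$ a nonempty event. Then there exists a coherent$_1$ conditional prevision $P(\cdot\mid\cdot)$ on the set $\{(X,B):X\in\mathcal{L},\ B\ne\emptyset\}$, with $P(X\mid\Omega)=P(X)$ for $X\in\mathcal{D}$, such that for each nonempty event $B$, $P(\cdot\mid B)$ is a finitely additive expectation on $\mathcal{L}$ with $P(XB\mid B)=P(X\mid B)$ for all $X\in\mathcal{L}$; that is, $P(\cdot\mid\cdot)$ is a finitely additive conditional expectation.
   Context: Random variables are real-valued functions on a nonempty set $\Omega$; events are subsets, identified with indicator functions; $XB$ is the pointwise product. Previsions are extended real numbers; $P(X)=P(X\mid\Omega)$. Coherence$_1$: a collection $\{P(X_i\mid B_i):i\in I\}$ (with nonempty $B_i$) is coherent$_1$ if for every finite $\{i_1,\dots,i_n\}\subseteq I$, all real $\alpha_1,\dots,\alpha_n$ with $\alpha_j\ge 0$ whenever $P(X_{i_j}\mid B_{i_j})=+\infty$ and $\alpha_j\le 0$ whenever $P(X_{i_j}\mid B_{i_j})=-\infty$, and all real $c_j$ with $c_j=P(X_{i_j}\mid B_{i_j})$ whenever finite, $\sup_\omega \sum_{j=1}^n \alpha_j B_{i_j}(\omega)[X_{i_j}(\omega)-c_j]\ge 0$. A finitely additive expectation on a linear space $\mathcal{L}$ containing constants is a map $L:\mathcal{L}\to\mathbb{R}\cup\{\pm\infty\}$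 that is nonnegative ($X\le Y$ implies $L(X)\le L(Y)$), extended-linear ($L(\alpha X+\beta Y)=\alpha L(X)+\beta L(Y)$ for real $\alpha,\beta$ whenever the right side is not $\infty-\infty$, with $0\times(\pm\infty)=0$), and has $L(1)=1$. Finitely additive conditional expectation: given a linear space $\mathcal{L}$, a collection $\mathcal{B}$ of nonempty events including $\Omega$ with $XB\in\mathcal{L}$ for $X\in\mathcal{L}$, $B\in\mathcal{B}$, a map $L(\cdot\mid\cdot):\mathcal{L}\times\mathcal{B}\to\mathbb{R}\cup\{\pm\infty\}$ is a finitely additive conditional expectation if for each $B\in\mathcal{B}$, $L(\cdot\mid B)$ is a finitely additive expectation on $\mathcal{L}$ with $L(XB\mid B)=L(X\mid B)$, and $\{L(X\mid B)\}$ is a coherent$_1$ conditional prevision. *)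

(* Defs.v *)
From Stdlib Require Import Reals List ClassicalEpsilon.
From Coquelicot Require Import Coquelicot.
Open Scope R_scope.

(* events are subsets of Omega, identified with their indicator functions *)
Definition indic {Omega : Type} (B : Omega -> Prop) (w : Omega) : R :=
  if excluded_middle_informative (B w) then 1 else 0.

Definition nonempty {Omega : Type} (B : Omega -> Prop) : Prop := exists w, B w.

Definition fullset {Omega : Type} : Omega -> Prop := fun _ => True.

Definition supf {Omega : Type} (f : Omega -> R) : Rbar :=
  Lub_Rbar (fun y => exists w, y = f w).

(* Coherence_1 of a collection {p i = P(X i | B i) : idx i}.  A finite
   subfamily {i_1,...,i_n} together with the alpha_j and c_j is encoded as a
   list of triples (i_j, alpha_j, c_j) with pairwise distinct indices. *)
Definition admissible {I : Type} (idx : I -> Prop) (p : I -> Rbar)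
    (s : list (I * R * R)) : Prop :=
  NoDup (map (fun t => fst (fst t)) s) /\
  List.Forall (fun t : I * R * R =>
            idx (fst (fst t)) /\
            (p (fst (fst t)) = p_infty -> 0 <= snd (fst t)) /\
            (p (fst (fst t)) = m_infty -> snd (fst t) <= 0) /\
            (forall r : R, p (fst (fst t)) = Finite r -> snd t = r)) s.

Definition gain {Omega I : Type} (X : I -> Omega -> R) (B : I -> Omega -> Prop)
    (s : list (I * R * R)) (w : Omega) : R :=
  fold_right (fun t acc => let '(i, a, c) := t in
                a * indic (B i) w * (X i w - c) + acc) 0 s.

Definition coherent1 {Omega I : Type} (idx : I -> Prop) (X : I -> Omega -> R)
    (B : I -> Omega -> Prop) (p : I -> Rbar) : Prop :=
  (forall i, idx i -> nonempty (B i)) /\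
  forall s, admissible idx p s -> Rbar_le (Finite 0) (supf (gain X B s)).

Definition spanL {Omega : Type} (D : (Omega -> R) -> Prop) (f : Omega -> R) : Prop :=
  exists s : list (R * (Omega -> R) * (Omega -> Prop)),
    List.Forall (fun t : R * (Omega -> R) * (Omega -> Prop) =>
              D (snd (fst t)) /\ nonempty (snd t)) s /\
    forall w, f w = fold_right (fun t acc => let '(a, X, B) := t in
                                  a * X w * indic B w + acc) 0 s.

(* finitely additive expectation on a linear space L (0 * (+-oo) = 0 is
   Coquelicot's Rbar_mult convention; Rbar_plus' = None exactly for oo - oo) *)
Definition fa_expectation {Omega : Type} (L : (Omega -> R) -> Prop)
    (E : (Omega -> R) -> Rbar) : Prop :=
  (forall X Y, L X -> L Y -> (forall w, X w <= Y w) -> Rbar_le (E X) (E Y)) /\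
  (forall X Y (a b : R) z, L X -> L Y ->
     Rbar_plus' (Rbar_mult (Finite a) (E X)) (Rbar_mult (Finite b) (E Y)) = Some z ->
     E (fun w => a * X w + b * Y w) = z) /\
  E (fun _ => 1) = Finite 1.

(* Main.v *)
Require Import Defs.
From Stdlib Require Import Reals List ClassicalEpsilon Lra Lia Psatz.
From Coquelicot Require Import Coquelicot.
From mathcomp Require classical_sets filter.
Open Scope R_scope.
Lemma ultra_exists (T : Type) (F0 : (T -> Prop) -> Prop) :
  Filter F0 -> ~ F0 (fun _ => False) ->
  exists U, (forall S, F0 S -> U S) /\ ProperFilter U /\
            (forall S, U S \/ U (fun x => ~ S x)).
Proof.
intros HF Hne.
assert (PF : @filter.ProperFilter T F0).
{ constructor.
  - exact Hne.
  - constructor.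
    + exact (filter_true).
    + intros A B HA HB. exact (filter_and A B HA HB).
    + intros A B HAB HA. exact (filter_imp A B HAB HA). }
destruct (filter.ultraFilterLemma PF) as [G [UG sub]].
exists G. split; [exact sub|]. split.
- assert (PG : @filter.ProperFilter T G) by (apply filter.ultra_proper).
  assert (FG : @filter.Filter T G) by (apply filter.filter_filter).
  constructor.
  + intros P HP. destruct (classic (exists x, P x)) as [h|h]; [exact h|].
    exfalso. apply (filter.filter_not_empty G).
    eapply filter.filterS; [|exact HP].
    intros x Px. apply h. exists x; exact Px.
  + constructor.
    * exact filter.filterT.
    * intros A B HA HB. exact (filter.filterI HA HB).
    * intros A B HAB HA. exact (filter.filterS HAB HA).
- intros S. exact (filter.in_ultra_setVsetC S UG).
Qed.

Definition ulim {T : Type} (U : (T -> Prop) -> Prop) (x : T -> R) : Rbar :=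
  Lub_Rbar (fun t => U (fun i => t <= x i)).

Definition Ultra {T : Type} (U : (T -> Prop) -> Prop) : Prop :=
  forall S, U S \/ U (fun x => ~ S x).

Lemma ball_R (r e y : R) : ball r e y <-> Rabs (y - r) < e.
Proof. reflexivity. Qed.

Lemma ulim_H1 {T} (U : (T -> Prop) -> Prop) (FU : ProperFilter U) (x : T -> R) (t : R) :
  Rbar_lt (Finite t) (ulim U x) -> U (fun i => t < x i).
Proof.
intros H. destruct (Lub_Rbar_correct (fun t => U (fun i => t <= x i))) as [ub lub].
destruct (classic (exists t', t < t' /\ U (fun i => t' <= x i))) as [[t' [h1 h2]]|h].
- eapply filter_imp; [|exact h2]. intros i hi; simpl in *; lra.
- exfalso. assert (Rbar_le (ulim U x) (Finite t)).
  { apply lub. intros y Hy. simpl. destruct (Rle_dec y t) as [l|l]; [exact l|].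
    exfalso. apply h. exists y. split; [lra|exact Hy]. }
  unfold ulim in *. destruct (Lub_Rbar _); simpl in *; lra.
Qed.

Lemma ulim_H2 {T} (U : (T -> Prop) -> Prop) (FU : ProperFilter U) (UU : Ultra U)
  (x : T -> R) (t : R) :
  Rbar_lt (ulim U x) (Finite t) -> U (fun i => x i < t).
Proof.
intros H. destruct (Lub_Rbar_correct (fun t => U (fun i => t <= x i))) as [ub lub].
destruct (UU (fun i => t <= x i)) as [h|h].
- exfalso. specialize (ub t h). unfold ulim in H. destruct (Lub_Rbar _); simpl in *; lra.
- eapply filter_imp; [|exact h]. intros i hi; simpl in *; lra.
Qed.

Lemma ulim_spec {T} (U : (T -> Prop) -> Prop) (FU : ProperFilter U) (UU : Ultra U)
  (x : T -> R) : filterlim x U (Rbar_locally (ulim U x)).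
Proof.
intros P HP. unfold filtermap.
destruct (ulim U x) as [r| |] eqn:E; simpl in HP.
- destruct HP as [eps Heps].
  assert (A1 := ulim_H1 U FU x (r - eps)). rewrite E in A1.
  assert (A2 := ulim_H2 U FU UU x (r + eps)). rewrite E in A2.
  assert (B1 : U (fun i => r - eps < x i)) by (apply A1; simpl; destruct eps; simpl; lra).
  assert (B2 : U (fun i => x i < r + eps)) by (apply A2; simpl; destruct eps; simpl; lra).
  eapply filter_imp; [|exact (filter_and _ _ B1 B2)].
  intros i [h1 h2]. apply Heps. apply ball_R. apply Rabs_def1; lra.
- destruct HP as [M HM]. assert (A1 := ulim_H1 U FU x M). rewrite E in A1.
  eapply filter_imp; [|apply A1; exact I]. intros i hi. apply HM; exact hi.
- destruct HP as [M HM]. assert (A2 := ulim_H2 U FU UU x M). rewrite E in A2.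
  eapply filter_imp; [|apply A2; exact I]. intros i hi. apply HM; exact hi.
Qed.

Lemma Rbar_loc_lt (L : Rbar) (q : R) : Rbar_lt L (Finite q) -> Rbar_locally L (fun y => y < q).
Proof.
destruct L as [r| |]; simpl; intros H.
- assert (h : 0 < q - r) by lra. exists (mkposreal _ h). intros y hy.
  apply ball_R in hy. simpl in hy. apply Rabs_def2 in hy. unfold minus, plus, opp in hy; simpl in hy. destruct hy; lra.
- contradiction.
- exists q. auto.
Qed.

Lemma Rbar_loc_gt (L : Rbar) (q : R) : Rbar_lt (Finite q) L -> Rbar_locally L (fun y => q < y).
Proof.
destruct L as [r| |]; simpl; intros H.
- assert (h : 0 < r - q) by lra. exists (mkposreal _ h). intros y hy.
  apply ball_R in hy. simpl in hy. apply Rabs_def2 in hy. unfold minus, plus, opp in hy; simpl in hy. destruct hy; lra.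
- exists q. auto.
- contradiction.
Qed.

Lemma Rbar_between (a b : Rbar) : Rbar_lt a b -> exists q : R, Rbar_lt a (Finite q) /\ Rbar_lt (Finite q) b.
Proof.
destruct a as [a| |]; destruct b as [b| |]; simpl; intros H; try contradiction.
- exists ((a+b)/2). simpl; split; lra.
- exists (a+1). simpl; split; [lra|exact I].
- exists (b-1). simpl; split; [exact I|lra].
- exists 0. simpl; split; exact I.
Qed.

Lemma Rbar_lim_unique {T} (U : (T -> Prop) -> Prop) (FU : ProperFilter U)
  (x : T -> R) (L1 L2 : Rbar) :
  filterlim x U (Rbar_locally L1) -> filterlim x U (Rbar_locally L2) -> L1 = L2.
Proof.
intros H1 H2.
assert (K : forall a b : Rbar, filterlim x U (Rbar_locally a) -> filterlim x U (Rbar_locally b) -> ~ Rbar_lt a b).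
{ intros a b Ha Hb Hab. destruct (Rbar_between a b Hab) as [q [h1 h2]].
  specialize (Ha _ (Rbar_loc_lt a q h1)). specialize (Hb _ (Rbar_loc_gt b q h2)).
  unfold filtermap in *. destruct (filter_ex _ (filter_and _ _ Ha Hb)) as [i [u v]]. lra. }
destruct (Rbar_total_order L1 L2) as [[h|h]|h]; [exfalso; exact (K _ _ H1 H2 h)|exact h|].
exfalso; exact (K _ _ H2 H1 h).
Qed.

Lemma ulim_unique {T} (U : (T -> Prop) -> Prop) (FU : ProperFilter U) (UU : Ultra U)
  (x : T -> R) (L : Rbar) : filterlim x U (Rbar_locally L) -> ulim U x = L.
Proof. intros H. exact (Rbar_lim_unique U FU x _ _ (ulim_spec U FU UU x) H). Qed.

Lemma ulim_le {T} (U : (T -> Prop) -> Prop) (FU : ProperFilter U) (x y : T -> R) :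
  U (fun i => x i <= y i) -> Rbar_le (ulim U x) (ulim U y).
Proof.
intros H. destruct (Lub_Rbar_correct (fun t => U (fun i => t <= x i))) as [ubx lubx].
destruct (Lub_Rbar_correct (fun t => U (fun i => t <= y i))) as [uby luby].
apply lubx. intros t ht. apply uby.
eapply filter_imp; [|exact (filter_and _ _ ht H)]. intros i [a b]; lra.
Qed.

Definition Em {Omega : Type} (mu : list (R * Omega)) (f : Omega -> R) : R :=
  fold_right (fun t acc => fst t * f (snd t) + acc) 0 mu.
Definition valid {Omega : Type} (mu : list (R * Omega)) : Prop :=
  List.Forall (fun t => 0 <= fst t) mu /\ Em mu (fun _ => 1) = 1.

Lemma Em_ext {Omega} (mu : list (R*Omega)) f g : (forall w, f w = g w) -> Em mu f = Em mu g.
Proof. intros H; induction mu as [|t mu IH]; simpl; [reflexivity|rewrite H, IH; reflexivity]. Qed.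

Lemma Em_lin {Omega} (mu : list (R*Omega)) a b f g :
  Em mu (fun w => a * f w + b * g w) = a * Em mu f + b * Em mu g.
Proof. induction mu as [|t mu IH]; simpl; [ring|rewrite IH; ring]. Qed.

Lemma Em_le {Omega} (mu : list (R*Omega)) f g : List.Forall (fun t => 0 <= fst t) mu ->
  (forall w, f w <= g w) -> Em mu f <= Em mu g.
Proof.
intros Hp H; induction mu as [|t mu IH]; simpl; [lra|].
inversion Hp; subst. specialize (IH H3). specialize (H (snd t)).
assert (fst t * f (snd t) <= fst t * g (snd t)) by (apply Rmult_le_compat_l; assumption). lra.
Qed.

Lemma Em_app {Omega} (m1 m2 : list (R*Omega)) f : Em (m1 ++ m2) f = Em m1 f + Em m2 f.
Proof. induction m1 as [|t m IH]; simpl; [ring|rewrite IH; ring]. Qed.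

Lemma Em_scale {Omega} (mu : list (R*Omega)) c f :
  Em (map (fun t => (c * fst t, snd t)) mu) f = c * Em mu f.
Proof. induction mu as [|t mu IH]; simpl; [ring|rewrite IH; ring]. Qed.

Lemma Em_point {Omega} (w : Omega) f : Em ((1, w) :: nil) f = f w.
Proof. simpl. ring. Qed.

Lemma valid_point {Omega} (w : Omega) : valid ((1, w) :: nil).
Proof. split; [constructor; [simpl; lra|constructor]|simpl; ring]. Qed.

Lemma valid_mix {Omega} (m1 m2 : list (R*Omega)) t : 0 <= t <= 1 -> valid m1 -> valid m2 ->
  valid (map (fun u => ((1 - t) * fst u, snd u)) m1 ++ map (fun u => (t * fst u, snd u)) m2).
Proof.
intros Ht [p1 e1] [p2 e2]. split.
- apply Forall_app; split; apply Forall_map; eapply Forall_impl; try eassumption;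
  intros a ha; simpl; apply Rmult_le_pos; lra.
- rewrite Em_app, !Em_scale, e1, e2. ring.
Qed.

Lemma Em_mix {Omega} (m1 m2 : list (R*Omega)) t f :
  Em (map (fun u => ((1 - t) * fst u, snd u)) m1 ++ map (fun u => (t * fst u, snd u)) m2) f
  = (1 - t) * Em m1 f + t * Em m2 f.
Proof. rewrite Em_app, !Em_scale. reflexivity. Qed.

Lemma Em_neg {Omega} (mu : list (R*Omega)) g : List.Forall (fun t => 0 <= fst t) mu ->
  (forall w, g w < 0) -> Em mu g < 0 \/ (Em mu g = 0 /\ Em mu (fun _ => 1) = 0).
Proof.
intros Hp Hg; induction mu as [|t mu IH]; simpl; [right; split; reflexivity|].
inversion Hp; subst. specialize (IH H2). specialize (Hg (snd t)).
destruct (Rle_lt_or_eq_dec _ _ H1) as [h|h].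
- left. assert (fst t * g (snd t) < 0) by (apply Rmult_pos_neg; assumption).
  destruct IH as [IH|[IH _]]; lra.
- rewrite <- h. destruct IH as [IH|[IH1 IH2]]; [left; lra|right; split; lra].
Qed.

Lemma Em_exists {Omega} (mu : list (R*Omega)) g : valid mu -> 0 <= Em mu g -> exists w, 0 <= g w.
Proof.
intros [Hp H1] H. destruct (classic (exists w, 0 <= g w)) as [h|h]; [exact h|].
exfalso. assert (Hg : forall w, g w < 0).
{ intros w. destruct (Rlt_dec (g w) 0) as [l|l]; [exact l|]. exfalso; apply h; exists w; lra. }
destruct (Em_neg mu g Hp Hg) as [h'|[_ h']]; lra.
Qed.

Lemma indic_01 {Omega} (B : Omega -> Prop) w : (indic B w = 0 \/ indic B w = 1).
Proof. unfold indic; destruct (excluded_middle_informative (B w)); auto. Qed.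

Definition sumL {A : Type} (G : list A) (f : A -> R) : R :=
  fold_right (fun X acc => f X + acc) 0 G.

Lemma sumL_ext {A} (G : list A) f g : (forall X, In X G -> f X = g X) -> sumL G f = sumL G g.
Proof.
induction G as [|a G IH]; intros H; simpl; [reflexivity|].
rewrite H by (left; reflexivity). rewrite IH; [reflexivity|intros; apply H; right; assumption].
Qed.

Lemma sumL_lin {A} (G : list A) a b f g :
  sumL G (fun X => a * f X + b * g X) = a * sumL G f + b * sumL G g.
Proof. induction G as [|x G IH]; simpl; [ring|rewrite IH; ring]. Qed.

Lemma sumL_plus {A} (G : list A) f g :
  sumL G (fun X => f X + g X) = sumL G f + sumL G g.
Proof. induction G as [|x G IH]; simpl; [ring|rewrite IH; ring]. Qed.

Lemma sumL_scal {A} (G : list A) a f :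
  sumL G (fun X => a * f X) = a * sumL G f.
Proof. induction G as [|x G IH]; simpl; [ring|rewrite IH; ring]. Qed.

Lemma sumL_le {A} (G : list A) f g : (forall X, In X G -> f X <= g X) -> sumL G f <= sumL G g.
Proof.
induction G as [|a G IH]; intros H; simpl; [lra|].
assert (f a <= g a) by (apply H; left; reflexivity).
assert (sumL G f <= sumL G g) by (apply IH; intros; apply H; right; assumption). lra.
Qed.

Lemma sumL_zero {A} (G : list A) : sumL G (fun _ => 0) = 0.
Proof. induction G; simpl; [reflexivity|rewrite IHG; ring]. Qed.

Lemma sumL_term {A} (G : list A) f X : In X G -> (forall Y, In Y G -> 0 <= f Y) -> f X <= sumL G f.
Proof.
induction G as [|a G IH]; intros HX H; simpl; [destruct HX|].
assert (0 <= f a) by (apply H; left; reflexivity).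
assert (0 <= sumL G f).
{ rewrite <- (sumL_zero G). apply sumL_le. intros; apply H; right; assumption. }
destruct HX as [e|HX]; [subst; lra|].
assert (f X <= sumL G f) by (apply IH; [assumption|intros; apply H; right; assumption]). lra.
Qed.

Lemma sumL_delta {A} (G : list A) f X0 : NoDup G -> In X0 G ->
  sumL G (fun X => if excluded_middle_informative (X = X0) then f X else 0) = f X0.
Proof.
induction G as [|a G IH]; intros Hn HX; simpl; [destruct HX|].
inversion Hn; subst. destruct HX as [e|HX].
- subst. destruct (excluded_middle_informative (X0 = X0)) as [_|n]; [|exfalso; apply n; reflexivity].
  rewrite (sumL_ext G _ (fun _ => 0)); [rewrite sumL_zero; ring|].
  intros X HX. destruct (excluded_middle_informative (X = X0)); [subst; contradiction|reflexivity].
- destruct (excluded_middle_informative (a = X0)) as [e|_]; [subst; contradiction|].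
  rewrite IH by assumption. ring.
Qed.

Lemma Em_sumL {Omega A} (mu : list (R*Omega)) (G : list A) (h : A -> Omega -> R) :
  Em mu (fun w => sumL G (fun X => h X w)) = sumL G (fun X => Em mu (h X)).
Proof.
induction G as [|a G IH]; simpl.
- rewrite (Em_ext mu _ (fun w => 0 * 0 + 0 * 0)) by (intros; ring).
  rewrite Em_lin. ring.
- rewrite (Em_ext mu _ (fun w => 1 * h a w + 1 * sumL G (fun X => h X w))) by (intros; ring).
  rewrite Em_lin, IH. ring.
Qed.

Lemma lim_plus {T} (U : (T -> Prop) -> Prop) (FU : Filter U) (x y : T -> R) Lx Ly z :
  filterlim x U (Rbar_locally Lx) -> filterlim y U (Rbar_locally Ly) ->
  Rbar_plus' Lx Ly = Some z -> filterlim (fun i => x i + y i) U (Rbar_locally z).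
Proof.
intros Hx Hy Hz. apply (@filterlim_comp_2 _ _ _ _ _ _ _ _ FU x y Rplus Hx Hy).
apply filterlim_Rbar_plus. exact Hz.
Qed.

Lemma lim_scal {T} (U : (T -> Prop) -> Prop) (FU : Filter U) (x : T -> R) a L :
  filterlim x U (Rbar_locally L) -> filterlim (fun i => a * x i) U (Rbar_locally (Rbar_mult a L)).
Proof.
intros Hx. eapply filterlim_comp; [exact Hx|]. apply filterlim_Rbar_mult_l.
Qed.

Lemma lim_mult_fin {T} (U : (T -> Prop) -> Prop) (FU : Filter U) (x y : T -> R) (a b : R) :
  filterlim x U (Rbar_locally a) -> filterlim y U (Rbar_locally b) ->
  filterlim (fun i => x i * y i) U (Rbar_locally (a * b)).
Proof.
intros Hx Hy. apply (@filterlim_comp_2 _ _ _ _ _ _ _ _ FU x y Rmult Hx Hy).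
apply (filterlim_Rbar_mult a b (Finite (a*b))). reflexivity.
Qed.

Lemma lim_plus_fin {T} (U : (T -> Prop) -> Prop) (FU : Filter U) (x y : T -> R) (a b : R) :
  filterlim x U (Rbar_locally a) -> filterlim y U (Rbar_locally b) ->
  filterlim (fun i => x i + y i) U (Rbar_locally (a + b)).
Proof. intros Hx Hy. exact (lim_plus U FU x y a b (a+b) Hx Hy eq_refl). Qed.

Lemma lim_const {T} (U : (T -> Prop) -> Prop) (FU : Filter U) (c : R) :
  filterlim (fun _ => c) U (Rbar_locally c).
Proof. apply filterlim_const. Qed.

Lemma lim_sumL {T A} (U : (T -> Prop) -> Prop) (FU : Filter U) (G : list A) (f : T -> A -> R) (g : A -> R) :
  (forall X, In X G -> filterlim (fun i => f i X) U (Rbar_locally (g X))) ->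
  filterlim (fun i => sumL G (f i)) U (Rbar_locally (sumL G g)).
Proof.
induction G as [|a G IH]; intros H; simpl.
- apply (lim_const U FU).
- apply (lim_plus_fin U FU); [apply H; left; reflexivity|apply IH; intros; apply H; right; assumption].
Qed.

Lemma ulim_const {T} (U : (T -> Prop) -> Prop) (FU : ProperFilter U) (UU : Ultra U) (c : R) :
  ulim U (fun _ => c) = Finite c.
Proof. apply ulim_unique; try assumption. apply (lim_const U _). Qed.

Lemma ulim_ext {T} (U : (T -> Prop) -> Prop) (FU : ProperFilter U) (x y : T -> R) :
  (forall i, x i = y i) -> ulim U x = ulim U y.
Proof.
intros H. apply Rbar_le_antisym; apply ulim_le; try assumption;
  eapply filter_imp; try apply filter_true; intros i _; rewrite H; lra.
Qed.

Lemma lim_le {T} (U : (T -> Prop) -> Prop) (FU : ProperFilter U) (UU : Ultra U) (x : T -> R) (L c : R) :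
  filterlim x U (Rbar_locally L) -> U (fun i => c <= x i) -> c <= L.
Proof.
intros H Hc. assert (E := ulim_unique U FU UU x _ H).
assert (Hle := ulim_le U FU (fun _ => c) x Hc). rewrite E, ulim_const in Hle by assumption. exact Hle.
Qed.

Lemma lim_ge {T} (U : (T -> Prop) -> Prop) (FU : ProperFilter U) (UU : Ultra U) (x : T -> R) (L c : R) :
  filterlim x U (Rbar_locally L) -> U (fun i => x i <= c) -> L <= c.
Proof.
intros H Hc. assert (E := ulim_unique U FU UU x _ H).
assert (Hle := ulim_le U FU x (fun _ => c) Hc). rewrite E, ulim_const in Hle by assumption. exact Hle.
Qed.

Lemma small_inv (d : R) : 0 < d -> exists N : nat, / INR (S N) < d.
Proof.
intros Hd. destruct (archimed_cor1 d Hd) as [N [h1 h2]]. exists N.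
apply Rle_lt_trans with (/ INR N); [|exact h1].
apply Rinv_le_contravar; [apply lt_0_INR; exact h2|]. rewrite S_INR; lra.
Qed.

Lemma inv_S_pos (m : nat) : 0 < / INR (S m).
Proof. apply Rinv_0_lt_compat, lt_0_INR; lia. Qed.

Lemma inv_S_le1 (m : nat) : / INR (S m) <= 1.
Proof.
rewrite <- Rinv_1. apply Rinv_le_contravar; [lra|]. rewrite S_INR. assert (0 <= INR m) by apply pos_INR. lra.
Qed.

Lemma inv_S_mono (m n : nat) : (n <= m)%nat -> / INR (S m) <= / INR (S n).
Proof.
intros H. apply Rinv_le_contravar; [apply lt_0_INR; lia|]. apply le_INR; lia.
Qed.

Definition relK {Omega} (P : (Omega -> R) -> Rbar) (X : Omega -> R) (a e : R) : Prop :=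
  match P X with Finite _ => a = e | p_infty => a <= e | m_infty => e <= a end.

Definition inK {Omega} (P : (Omega -> R) -> Rbar) (G : list (Omega -> R)) (k : (Omega -> R) -> R) : Prop :=
  exists mu : list (R * Omega), valid mu /\ forall X, In X G -> relK P X (k X) (Em mu X).

Definition Nrm {Omega} (G : list (Omega -> R)) (p k : (Omega -> R) -> R) : R :=
  sumL G (fun X => (k X - p X) * (k X - p X)).

Lemma relK_refl {Omega} P (X : Omega -> R) a : relK P X a a.
Proof. unfold relK; destruct (P X); lra. Qed.

Lemma relK_mix {Omega} P (X : Omega -> R) a1 e1 a2 e2 t : 0 <= t <= 1 ->
  relK P X a1 e1 -> relK P X a2 e2 -> relK P X ((1 - t) * a1 + t * a2) ((1 - t) * e1 + t * e2).
Proof. unfold relK; destruct (P X); intros Ht h1 h2; [subst; reflexivity|nra|nra]. Qed.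

Lemma inK_mix {Omega} P G (k1 k2 : (Omega -> R) -> R) t : 0 <= t <= 1 ->
  inK P G k1 -> inK P G k2 -> inK P G (fun X => (1 - t) * k1 X + t * k2 X).
Proof.
intros Ht [m1 [v1 h1]] [m2 [v2 h2]].
exists (map (fun u => ((1 - t) * fst u, snd u)) m1 ++ map (fun u => (t * fst u, snd u)) m2).
split; [apply valid_mix; assumption|].
intros X HX. rewrite Em_mix. apply relK_mix; auto.
Qed.

Lemma inK_point {Omega} P G (w : Omega) : inK P G (fun X => X w).
Proof. exists ((1, w) :: nil). split; [apply valid_point|]. intros X _. rewrite Em_point. apply relK_refl. Qed.

Lemma quad_lemma (S1 S2 : R) : 0 <= S2 -> (forall t, 0 < t <= 1 -> 0 <= 2 * t * S1 + t * t * S2) -> 0 <= S1.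
Proof.
intros H2 H. destruct (Rle_dec 0 S1) as [h|h]; [exact h|exfalso].
set (t := Rmin 1 (- S1 / (S2 + 1))).
assert (Ht1 : t <= 1) by apply Rmin_l.
assert (Ht2 : t <= - S1 / (S2 + 1)) by apply Rmin_r.
assert (Ht0 : 0 < t).
{ unfold t. apply Rmin_glb_lt; [lra|]. apply Rdiv_lt_0_compat; lra. }
assert (Ht3 : t * (S2 + 1) <= - S1).
{ apply Rmult_le_reg_r with (/ (S2 + 1)); [apply Rinv_0_lt_compat; lra|].
  rewrite Rmult_assoc, Rinv_r by lra. unfold Rdiv in Ht2. lra. }
specialize (H t (conj Ht0 Ht1)). nra.
Qed.

Lemma le_eps (a b : R) : (forall d, 0 < d -> a <= b + d) -> a <= b.
Proof. intros H. destruct (Rle_dec a b) as [h|h]; [exact h|]. specialize (H ((a - b)/2)). lra. Qed.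

Lemma finite_ulim {T} (U : (T -> Prop) -> Prop) (FU : ProperFilter U) (UU : Ultra U) (x : T -> R) a b :
  (forall i, a <= x i <= b) -> ulim U x = Finite (real (ulim U x)).
Proof.
intros H.
assert (h1 := ulim_le U FU (fun _ => a) x (filter_imp _ _ (fun i _ => proj1 (H i)) filter_true)).
assert (h2 := ulim_le U FU x (fun _ => b) (filter_imp _ _ (fun i _ => proj2 (H i)) filter_true)).
rewrite ulim_const in h1, h2 by assumption.
destruct (ulim U x); simpl in *; try contradiction; reflexivity.
Qed.

Lemma nat_ultra : exists V : (nat -> Prop) -> Prop, ProperFilter V /\ Ultra V /\
  (forall N, V (fun m => (N <= m)%nat)).
Proof.
set (F0 := fun S : nat -> Prop => exists N, forall m, (N <= m)%nat -> S m).
assert (HF : Filter F0).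
{ constructor.
  - exists 0%nat. auto.
  - intros A B [N1 h1] [N2 h2]. exists (max N1 N2). intros m hm. split; [apply h1|apply h2]; lia.
  - intros A B HAB [N h]. exists N. auto. }
assert (Hne : ~ F0 (fun _ => False)). { intros [N h]. exact (h N (le_n N)). }
destruct (ultra_exists nat F0 HF Hne) as [V [sub [PV UV]]].
exists V. split; [exact PV|split; [exact UV|]]. intros N. apply sub. exists N; auto.
Qed.

Lemma gain_map {Omega I} (Xf : I -> Omega -> R) (Bf : I -> Omega -> Prop) (G : list I) a c w :
  gain Xf Bf (map (fun X => (X, a X, c X)) G) w = sumL G (fun X => a X * indic (Bf X) w * (Xf X w - c X)).
Proof. induction G as [|x G IH]; simpl; [reflexivity|rewrite IH; reflexivity]. Qed.

Lemma indic_full {Omega} (w : Omega) : indic fullset w = 1.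
Proof. unfold indic; destruct (excluded_middle_informative (fullset w)) as [_|n]; [reflexivity|exfalso; apply n; exact I]. Qed.

Lemma supf_le {Omega} (f : Omega -> R) (c : R) : (forall w, f w <= c) -> Rbar_le (supf f) c.
Proof.
intros H. unfold supf. destruct (Lub_Rbar_correct (fun y => exists w, y = f w)) as [ub lub].
apply lub. intros y [w ->]. simpl. apply H.
Qed.

Lemma sq_bound (x e : R) : 0 < e -> x * x < e * e -> Rabs x < e.
Proof. intros He H. destruct (Rle_dec 0 x); [rewrite Rabs_right by lra; nra|rewrite Rabs_left by lra; nra]. Qed.

Lemma core (Omega : Type) (w0 : Omega) (D : (Omega -> R) -> Prop) (P : (Omega -> R) -> Rbar)
  (HP : coherent1 D (fun X : Omega -> R => X) (fun _ => fullset) P)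
  (G : list (Omega -> R)) (HG : NoDup G) (HGD : forall X, In X G -> D X)
  (p : (Omega -> R) -> R) (Hp : forall X r, P X = Finite r -> p X = r)
  (eps : R) (Heps : 0 < eps) :
  exists k, inK P G k /\ Nrm G p k < eps.
Proof.
destruct (classic (exists k, inK P G k /\ Nrm G p k < eps)) as [h|h]; [exact h|exfalso].
assert (H : forall k, inK P G k -> eps <= Nrm G p k).
{ intros k hk. destruct (Rle_dec eps (Nrm G p k)) as [l|l]; [exact l|].
  exfalso; apply h; exists k; split; [exact hk|lra]. }
clear h.
set (SS := fun r => exists k, inK P G k /\ r = Nrm G p k).
destruct (Glb_Rbar_correct SS) as [lb glb].
assert (Hd1 : Rbar_le (Glb_Rbar SS) (Nrm G p (fun X => X w0))).
{ apply lb. exists (fun X => X w0). split; [apply inK_point|reflexivity]. }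
assert (Hd2 : Rbar_le eps (Glb_Rbar SS)).
{ apply glb. intros x [k [hk ->]]. simpl. apply H; exact hk. }
destruct (Glb_Rbar SS) as [dr| |] eqn:Ed; simpl in Hd1, Hd2; try contradiction.
assert (Hlb : forall k, inK P G k -> dr <= Nrm G p k).
{ intros k hk. assert (hh := lb (Nrm G p k) (ex_intro _ k (conj hk eq_refl))). exact hh. }
assert (Hmin : forall m : nat, exists k, inK P G k /\ Nrm G p k < dr + / INR (S m)).
{ intros m. destruct (classic (exists k, inK P G k /\ Nrm G p k < dr + / INR (S m))) as [hh|hh]; [exact hh|].
  exfalso. assert (HH : Rbar_le (dr + / INR (S m)) dr).
  { apply glb. intros x [k [hk ->]]. simpl.
    destruct (Rle_dec (dr + / INR (S m)) (Nrm G p k)) as [l|l]; [exact l|].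
    exfalso; apply hh; exists k; split; [exact hk|lra]. }
  unfold Rbar_le in HH. assert (hp := inv_S_pos m). lra. }
set (km := fun m => proj1_sig (constructive_indefinite_description _ (Hmin m))).
assert (Hkm : forall m, inK P G (km m) /\ Nrm G p (km m) < dr + / INR (S m)).
{ intros m. exact (proj2_sig (constructive_indefinite_description _ (Hmin m))). }
destruct nat_ultra as [V [FV [UV HV]]].
set (kstar := fun X => real (ulim V (fun m => km m X))).
assert (Hlim : forall X, In X G -> filterlim (fun m => km m X) V (Rbar_locally (kstar X))).
{ intros X HX.
  assert (B : forall m, p X - (dr + 2) <= km m X <= p X + (dr + 2)).
  { intros m. destruct (Hkm m) as [_ hn].
    assert (hh : (km m X - p X) * (km m X - p X) <= Nrm G p (km m)).
    { unfold Nrm. apply (sumL_term G (fun X => (km m X - p X) * (km m X - p X))); [exact HX|].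
      intros Y _; cbv beta. apply Rle_0_sqr. }
    assert (hi := inv_S_le1 m).
    assert (HH : Rabs (km m X - p X) < dr + 2).
    { apply sq_bound; [lra|]. revert hh hn hi Hd2 Heps. generalize (km m X - p X) (Nrm G p (km m)) (/ INR (S m)). clear. intros. nra. }
    apply Rabs_def2 in HH. lra. }
  assert (E := finite_ulim V FV UV _ _ _ B).
  unfold kstar. rewrite <- E. apply ulim_spec; assumption. }
assert (Hsq : forall X c t, In X G ->
  filterlim (fun m => ((1 - t) * km m X + c) * ((1 - t) * km m X + c)) V
    (Rbar_locally (((1 - t) * kstar X + c) * ((1 - t) * kstar X + c)))).
{ intros X c t HX.
  assert (L1 : filterlim (fun m => (1 - t) * km m X + c) V (Rbar_locally ((1 - t) * kstar X + c))).
  { apply (lim_plus_fin V _). apply (lim_scal V _ _ (1 - t) (kstar X)). apply Hlim; exact HX.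
    apply (lim_const V _). }
  exact (lim_mult_fin V _ _ _ _ _ L1 L1). }
assert (HQ : forall k t, inK P G k -> 0 <= t <= 1 ->
  dr <= sumL G (fun X => ((1 - t) * kstar X + (t * k X - p X)) * ((1 - t) * kstar X + (t * k X - p X)))).
{ intros k t hk ht.
  apply (lim_le V FV UV (fun m => sumL G (fun X => ((1 - t) * km m X + (t * k X - p X)) * ((1 - t) * km m X + (t * k X - p X))))).
  - apply (lim_sumL V _). intros X HX. apply Hsq; exact HX.
  - eapply filter_imp; [|exact filter_true]. intros m _.
    assert (hh := Hlb _ (inK_mix P G (km m) k t ht (proj1 (Hkm m)) hk)).
    eapply Rle_trans; [exact hh|]. right. unfold Nrm. apply sumL_ext. intros X _. ring. }
assert (HN1 : dr <= Nrm G p kstar).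
{ assert (hh := HQ (fun X => X w0) 0 (inK_point P G w0) (conj (Rle_refl 0) Rle_0_1)).
  eapply Rle_trans; [exact hh|]. right. unfold Nrm. apply sumL_ext. intros X _. ring. }
assert (HN2 : Nrm G p kstar <= dr).
{ apply le_eps. intros d hd. destruct (small_inv d hd) as [N hN].
  apply (lim_ge V FV UV (fun m => sumL G (fun X => ((1 - 0) * km m X + - p X) * ((1 - 0) * km m X + - p X)))).
  - replace (Nrm G p kstar) with (sumL G (fun X => ((1 - 0) * kstar X + - p X) * ((1 - 0) * kstar X + - p X))).
    + apply (lim_sumL V _). intros X HX. apply Hsq; exact HX.
    + unfold Nrm. apply sumL_ext. intros X _. ring.
  - eapply filter_imp; [|exact (HV N)]. intros m hm.
    assert (h1 := proj2 (Hkm m)). assert (h2 := inv_S_mono m N hm).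
    replace (sumL G (fun X => ((1 - 0) * km m X + - p X) * ((1 - 0) * km m X + - p X))) with (Nrm G p (km m)).
    + lra.
    + unfold Nrm. apply sumL_ext. intros X _. ring. }
assert (Hvar : forall k, inK P G k ->
  0 <= sumL G (fun X => (kstar X - p X) * (k X - kstar X))).
{ intros k hk. apply (quad_lemma _ (sumL G (fun X => (k X - kstar X) * (k X - kstar X)))).
  - rewrite <- (sumL_zero G). apply sumL_le. intros X _. apply Rle_0_sqr.
  - intros t ht. assert (hh := HQ k t hk (conj (Rlt_le _ _ (proj1 ht)) (proj2 ht))).
    rewrite (sumL_ext G _ (fun X => (kstar X - p X) * (kstar X - p X) + (2 * t) * ((kstar X - p X) * (k X - kstar X))
       + (t * t) * ((k X - kstar X) * (k X - kstar X)))) in hh by (intros; ring).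
    rewrite !sumL_plus, !sumL_scal in hh. unfold Nrm in HN2. lra. }
set (al := fun X => p X - kstar X).
assert (Hgap : forall k, inK P G k -> sumL G (fun X => al X * (k X - p X)) <= - eps).
{ intros k hk. assert (hh := Hvar k hk).
  rewrite (sumL_ext G _ (fun X => (-1) * ((kstar X - p X) * (k X - kstar X)) + (-1) * ((kstar X - p X) * (kstar X - p X)))) by (intros; unfold al; ring).
  rewrite sumL_plus, !sumL_scal. unfold Nrm in HN1. lra. }
assert (Hsign : forall X0 s0, In X0 G -> (forall lam, 0 <= lam -> relK P X0 (X0 w0 + s0 * lam) (X0 w0)) ->
  s0 * al X0 <= 0).
{ intros X0 s0 HX0 Hrel. destruct (Rle_dec (s0 * al X0) 0) as [l|l]; [exact l|exfalso].
  set (C := sumL G (fun X => al X * (X w0 - p X))).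
  set (lam := (Rabs C + 1) / (s0 * al X0)).
  assert (Hlam : 0 <= lam).
  { unfold lam. apply Rlt_le, Rdiv_lt_0_compat; [assert (0 <= Rabs C) by apply Rabs_pos; lra|lra]. }
  set (k := fun X => X w0 + (if excluded_middle_informative (X = X0) then s0 * lam else 0)).
  assert (hk : inK P G k).
  { exists ((1, w0) :: nil). split; [apply valid_point|]. intros X HX. rewrite Em_point. unfold k.
    destruct (excluded_middle_informative (X = X0)) as [e|n].
    - subst. apply Hrel; exact Hlam.
    - rewrite Rplus_0_r. apply relK_refl. }
  assert (hh := Hgap k hk).
  rewrite (sumL_ext G _ (fun X => al X * (X w0 - p X) + (s0 * lam) * (if excluded_middle_informative (X = X0) then al X else 0))) in hh.
  - rewrite sumL_plus, sumL_scal, sumL_delta in hh by assumption. fold C in hh.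
    assert (nz : s0 * al X0 <> 0) by lra.
    assert (E : s0 * lam * al X0 = Rabs C + 1).
    { unfold lam, Rdiv. replace (s0 * ((Rabs C + 1) * / (s0 * al X0)) * al X0) with ((Rabs C + 1) * ((s0 * al X0) * / (s0 * al X0))) by ring.
      rewrite Rinv_r by exact nz. ring. }
    assert (Rabs C >= - C) by (rewrite <- Rabs_Ropp; apply Rle_ge, RRle_abs).
    lra.
  - intros X _. unfold k. destruct (excluded_middle_informative (X = X0)); ring. }
destruct HP as [_ HPs].
set (s := map (fun X => (X, al X, p X)) G).
assert (adm : admissible D P s).
{ split.
  - unfold s. rewrite map_map. simpl. rewrite map_id. exact HG.
  - apply Forall_forall. intros t Ht. unfold s in Ht. apply in_map_iff in Ht.
    destruct Ht as [X [<- HX]]. simpl. split; [apply HGD; exact HX|]. split; [|split].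
    + intros e. assert (hh := Hsign X (-1) HX). 
      assert (hh' : -1 * al X <= 0) by (apply hh; intros lam hl; unfold relK; rewrite e; lra). lra.
    + intros e. assert (hh := Hsign X 1 HX).
      assert (hh' : 1 * al X <= 0) by (apply hh; intros lam hl; unfold relK; rewrite e; lra). lra.
    + intros r e. apply Hp; exact e. }
specialize (HPs s adm).
assert (Hs : Rbar_le (supf (gain (fun X => X) (fun _ => fullset) s)) (- eps)).
{ apply supf_le. intros w. unfold s. rewrite gain_map.
  rewrite (sumL_ext G _ (fun X => al X * (X w - p X))) by (intros; rewrite indic_full; ring).
  apply (Hgap (fun X => X w)). apply inK_point. }
destruct (supf (gain (fun X => X) (fun _ => fullset) s)); simpl in *; try contradiction; lra.
Qed.

Definition cond {Omega} (P : (Omega -> R) -> Rbar) (X : Omega -> R) (n : nat) (mu : list (R * Omega)) : Prop :=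
  match P X with
  | Finite r => Rabs (Em mu X - r) <= / INR (S n)
  | p_infty => INR n <= Em mu X
  | m_infty => Em mu X <= - INR n
  end.

Lemma cond_mono {Omega} P (X : Omega -> R) n m mu : (n <= m)%nat -> cond P X m mu -> cond P X n mu.
Proof.
intros H. unfold cond. assert (h1 := inv_S_mono m n H). assert (h2 := le_INR _ _ H).
destruct (P X); lra.
Qed.

Lemma approx (Omega : Type) (w0 : Omega) (D : (Omega -> R) -> Prop) (P : (Omega -> R) -> Rbar)
  (HP : coherent1 D (fun X : Omega -> R => X) (fun _ => fullset) P)
  (F : list (Omega -> R)) (n : nat) :
  exists mu, valid mu /\ forall X, In X F -> D X -> cond P X n mu.
Proof.
set (decD := fun X : Omega -> R => if excluded_middle_informative (D X) then true else false).
set (G := nodup (fun x y : Omega -> R => excluded_middle_informative (x = y)) (filter decD F)).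
assert (HG : NoDup G) by apply NoDup_nodup.
assert (HGD : forall X, In X G -> D X).
{ intros X HX. apply nodup_In in HX. apply filter_In in HX. destruct HX as [_ h].
  unfold decD in h. destruct (excluded_middle_informative (D X)); [assumption|discriminate]. }
assert (HFG : forall X, In X F -> D X -> In X G).
{ intros X HX HD. apply nodup_In. apply filter_In. split; [exact HX|].
  unfold decD. destruct (excluded_middle_informative (D X)); [reflexivity|contradiction]. }
set (p := fun X => match P X with Finite r => r | p_infty => INR n + 1 | m_infty => - (INR n + 1) end).
assert (Hp : forall X r, P X = Finite r -> p X = r) by (intros X r e; unfold p; rewrite e; reflexivity).
set (e := / INR (S n)).
assert (He : 0 < e) by apply inv_S_pos.
assert (He1 : e <= 1) by apply inv_S_le1.
destruct (core Omega w0 D P HP G HG HGD p Hp (e * e) ltac:(nra)) as [k [[mu [hv hr]] hn]].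
exists mu. split; [exact hv|]. intros X HX HD.
assert (HXG := HFG X HX HD).
assert (hsq : (k X - p X) * (k X - p X) <= Nrm G p k).
{ unfold Nrm. apply (sumL_term G (fun X => (k X - p X) * (k X - p X))); [exact HXG|].
  intros Y _; cbv beta. apply Rle_0_sqr. }
assert (ha : Rabs (k X - p X) < e) by (apply sq_bound; [exact He|lra]).
apply Rabs_def2 in ha. specialize (hr X HXG).
assert (h0 : 0 <= INR n) by apply pos_INR.
unfold cond, relK, p, e in *. destruct (P X).
- destruct ha. apply Rabs_le; split; lra.
- destruct ha; lra.
- destruct ha; lra.
Qed.

Lemma filter_forall_list {T A} (U : (T -> Prop) -> Prop) (FU : Filter U) (s : list A) (Q : A -> T -> Prop) :
  (forall t, In t s -> U (Q t)) -> U (fun i => forall t, In t s -> Q t i).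
Proof.
induction s as [|a s IH]; intros H.
- eapply filter_imp; [|exact filter_true]. intros i _ t [].
- assert (h1 := H a (or_introl eq_refl)).
  assert (h2 := IH (fun t ht => H t (or_intror ht))).
  eapply filter_imp; [|exact (filter_and _ _ h1 h2)]. intros i [u v] t [<-|ht]; [exact u|apply v; exact ht].
Qed.

Lemma supf_ge0 {Omega} (f : Omega -> R) : (forall eta, 0 < eta -> exists w, - eta <= f w) -> Rbar_le 0 (supf f).
Proof.
intros H. unfold supf. destruct (Lub_Rbar_correct (fun y => exists w, y = f w)) as [ub _].
destruct (Lub_Rbar (fun y => exists w, y = f w)) as [r| |] eqn:E; simpl; [|exact I|].
- apply le_eps. intros d hd. destruct (H d hd) as [w hw]. assert (hh := ub (f w) (ex_intro _ w eq_refl)).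
  simpl in hh. lra.
- destruct (H 1 Rlt_0_1) as [w _]. exact (ub (f w) (ex_intro _ w eq_refl)).
Qed.

Lemma indic_nonneg {Omega} (B : Omega -> Prop) w : 0 <= indic B w.
Proof. destruct (indic_01 B w) as [h|h]; rewrite h; lra. Qed.

Lemma indic_in {Omega} (B : Omega -> Prop) w : B w -> indic B w = 1.
Proof. intros h; unfold indic; destruct (excluded_middle_informative (B w)); [reflexivity|contradiction]. Qed.

Lemma Em_nonneg {Omega} (mu : list (R*Omega)) f : List.Forall (fun t => 0 <= fst t) mu ->
  (forall w, 0 <= f w) -> 0 <= Em mu f.
Proof.
intros Hp H. replace 0 with (Em mu (fun _ => 0)).
- apply Em_le; assumption.
- rewrite (Em_ext mu _ (fun w => 0 * 0 + 0 * 0)) by (intros; ring). rewrite Em_lin. ring.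
Qed.

Lemma Em_null {Omega} (mu : list (R*Omega)) (B : Omega -> Prop) f : List.Forall (fun t => 0 <= fst t) mu ->
  Em mu (indic B) = 0 -> Em mu (fun w => f w * indic B w) = 0.
Proof.
intros Hp; induction mu as [|t mu IH]; simpl; intros H; [reflexivity|].
inversion Hp; subst.
assert (h1 : 0 <= fst t * indic B (snd t)) by (apply Rmult_le_pos; [assumption|apply indic_nonneg]).
assert (h2 : 0 <= Em mu (indic B)) by (apply Em_nonneg; [assumption|apply indic_nonneg]).
assert (e1 : fst t * indic B (snd t) = 0) by lra.
rewrite IH by (assumption || lra).
replace (fst t * (f (snd t) * indic B (snd t))) with (f (snd t) * (fst t * indic B (snd t))) by ring.
rewrite e1. ring.
Qed.

Lemma gain_sumL {Omega I} (Xf : I -> Omega -> R) (Bf : I -> Omega -> Prop) (s : list (I * R * R)) w :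
  gain Xf Bf s w = sumL s (fun t => snd (fst t) * indic (Bf (fst (fst t))) w * (Xf (fst (fst t)) w - snd t)).
Proof. induction s as [|[[i a] c] s IH]; simpl; [reflexivity|rewrite IH; reflexivity]. Qed.

Definition cmu {Omega} (HO : inhabited Omega) (mu : list (R * Omega)) (X : Omega -> R) (B : Omega -> Prop) : R :=
  if Rlt_dec 0 (Em mu (indic B)) then Em mu (fun w => X w * indic B w) / Em mu (indic B)
  else X (epsilon HO B).

Lemma cmu_term0 {Omega} (HO : inhabited Omega) mu (X : Omega -> R) B a : valid mu ->
  Em mu (fun w => a * indic B w * (X w - cmu HO mu X B)) = 0.
Proof.
intros [hp _].
rewrite (Em_ext mu _ (fun w => a * (X w * indic B w) + (- (a * cmu HO mu X B)) * indic B w)) by (intros; ring).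
rewrite Em_lin. unfold cmu. destruct (Rlt_dec 0 (Em mu (indic B))) as [h|h].
- field. lra.
- assert (h0 : 0 <= Em mu (indic B)) by (apply Em_nonneg; [assumption|apply indic_nonneg]).
  assert (e : Em mu (indic B) = 0) by lra.
  rewrite e, (Em_null mu B X hp e). ring.
Qed.

Lemma cmu_lin {Omega} (HO : inhabited Omega) mu (X Y : Omega -> R) B a b :
  cmu HO mu (fun w => a * X w + b * Y w) B = a * cmu HO mu X B + b * cmu HO mu Y B.
Proof.
unfold cmu. destruct (Rlt_dec 0 (Em mu (indic B))) as [h|h]; [|reflexivity].
rewrite (Em_ext mu _ (fun w => a * (X w * indic B w) + b * (Y w * indic B w))) by (intros; ring).
rewrite Em_lin. field. lra.
Qed.

Lemma cmu_one {Omega} (HO : inhabited Omega) mu B : cmu HO mu (fun _ => 1) B = 1.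
Proof.
unfold cmu. destruct (Rlt_dec 0 (Em mu (indic B))) as [h|h]; [|reflexivity].
rewrite (Em_ext mu _ (indic B)) by (intros; ring). field. lra.
Qed.

Lemma cmu_mono {Omega} (HO : inhabited Omega) mu (X Y : Omega -> R) B : valid mu ->
  (forall w, X w <= Y w) -> cmu HO mu X B <= cmu HO mu Y B.
Proof.
intros [hp _] H. unfold cmu. destruct (Rlt_dec 0 (Em mu (indic B))) as [h|h]; [|apply H].
unfold Rdiv. apply Rmult_le_compat_r; [apply Rlt_le, Rinv_0_lt_compat; exact h|].
apply Em_le; [exact hp|]. intros w. apply Rmult_le_compat_r; [apply indic_nonneg|apply H].
Qed.

Lemma cmu_indic {Omega} (HO : inhabited Omega) mu (X : Omega -> R) B : (exists w, B w) ->
  cmu HO mu (fun w => X w * indic B w) B = cmu HO mu X B.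
Proof.
intros HB. unfold cmu. destruct (Rlt_dec 0 (Em mu (indic B))) as [h|h].
- f_equal. apply Em_ext. intros w. destruct (indic_01 B w) as [e|e]; rewrite e; ring.
- rewrite indic_in; [ring|]. apply epsilon_spec; exact HB.
Qed.

Lemma cmu_full {Omega} (HO : inhabited Omega) mu (X : Omega -> R) : valid mu ->
  cmu HO mu X fullset = Em mu X.
Proof.
intros [_ h1]. unfold cmu.
assert (e : Em mu (indic fullset) = 1) by (rewrite <- h1; apply Em_ext; intros; apply indic_full).
rewrite e. destruct (Rlt_dec 0 1) as [_|n]; [|lra].
rewrite (Em_ext mu _ X) by (intros; rewrite indic_full; ring). field.
Qed.

Theorem lemma7p2 (Omega : Type) (HOmega : inhabited Omega)
  (D : (Omega -> R) -> Prop) (HD : forall c : R, D (fun _ => c))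
  (P : (Omega -> R) -> Rbar)
  (HP : coherent1 D (fun X : Omega -> R => X) (fun _ => fullset) P) :
  exists Pc : (Omega -> R) -> (Omega -> Prop) -> Rbar,
    coherent1 (fun i : (Omega -> R) * (Omega -> Prop) =>
                 spanL D (fst i) /\ nonempty (snd i))
              fst snd (fun i => Pc (fst i) (snd i)) /\
    (forall X, D X -> Pc X fullset = P X) /\
    (forall B, nonempty B ->
       fa_expectation (spanL D) (fun X => Pc X B) /\
       (forall X, spanL D X -> Pc (fun w => X w * indic B w) B = Pc X B)).
Proof.
pose proof HOmega as HO. destruct HO as [w0].
set (F0 := fun S : list (R * Omega) -> Prop => exists F n, forall mu, valid mu ->
  (forall X, In X F -> D X -> cond P X n mu) -> S mu).
assert (HF : Filter F0).
{ constructor.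
  - exists nil, 0%nat. auto.
  - intros A B [F1 [n1 h1]] [F2 [n2 h2]]. exists (F1 ++ F2), (max n1 n2).
    intros mu hv hc. split.
    + apply h1; [exact hv|]. intros X HX HDX. apply (cond_mono P X n1 (max n1 n2)); [lia|].
      apply hc; [apply in_or_app; left; exact HX|exact HDX].
    + apply h2; [exact hv|]. intros X HX HDX. apply (cond_mono P X n2 (max n1 n2)); [lia|].
      apply hc; [apply in_or_app; right; exact HX|exact HDX].
  - intros A B HAB [F [n h]]. exists F, n. intros mu hv hc. apply HAB, h; assumption. }
assert (Hne : ~ F0 (fun _ => False)).
{ intros [F [n h]]. destruct (approx Omega w0 D P HP F n) as [mu [hv hc]]. exact (h mu hv hc). }
destruct (ultra_exists _ F0 HF Hne) as [U [sub [FU UU]]].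
assert (Hval : U valid).
{ apply sub. exists nil, 0%nat. intros mu hv _. exact hv. }
set (Pc := fun X B => ulim U (fun mu => cmu HOmega mu X B)).
exists Pc. split; [|split].
-
  split; [intros i [_ h]; exact h|].
  intros s [_ Hs]. apply supf_ge0. intros eta Heta.
  set (A := sumL s (fun t => Rabs (snd (fst t)))).
  assert (HA : 0 <= A).
  { unfold A. rewrite <- (sumL_zero s). apply sumL_le. intros; apply Rabs_pos. }
  set (dl := eta / (A + 1)).
  assert (Hdl : 0 < dl) by (apply Rdiv_lt_0_compat; lra).
  assert (HAd : A * dl <= eta).
  { unfold dl. apply Rmult_le_reg_r with (A + 1); [lra|].
    unfold Rdiv. replace (A * (eta * / (A + 1)) * (A + 1)) with (A * eta * ((A + 1) * / (A + 1))) by ring.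
    rewrite Rinv_r by lra. nra. }
  assert (HU : U (fun mu => forall t, In t s ->
     - (Rabs (snd (fst t)) * dl) <= snd (fst t) * (cmu HOmega mu (fst (fst (fst t))) (snd (fst (fst t))) - snd t))).
  { apply (filter_forall_list U _). intros t Ht.
    rewrite Forall_forall in Hs. destruct (Hs t Ht) as [_ [hpi [hmi hfi]]]. clear Hs.
    destruct t as [[[X B] a] c]. simpl in *.
    assert (Hl := ulim_spec U FU UU (fun mu => cmu HOmega mu X B)).
    unfold Pc in hpi, hmi, hfi.
    destruct (ulim U (fun mu => cmu HOmega mu X B)) as [r| |] eqn:E.
    - specialize (hfi r eq_refl). subst c.
      assert (h := Hl (ball r (mkposreal _ Hdl)) (locally_ball r (mkposreal _ Hdl))).
      eapply filter_imp; [|exact h]. intros mu hb. apply ball_R in hb. change (Rabs (cmu HOmega mu X B - r) < dl) in hb.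
      set (x := cmu HOmega mu X B - r) in *.
      assert (e1 : - (a * x) <= Rabs (a * x)) by (rewrite <- Rabs_Ropp; apply RRle_abs).
      rewrite Rabs_mult in e1.
      assert (e2 : Rabs a * Rabs x <= Rabs a * dl) by (apply Rmult_le_compat_l; [apply Rabs_pos|lra]).
      lra.
    - specialize (hpi eq_refl).
      assert (h := Hl (fun y => c < y) (ex_intro _ c (fun y hy => hy))).
      eapply filter_imp; [|exact h]. intros mu hb. simpl in hb.
      assert (0 <= Rabs a * dl) by (apply Rmult_le_pos; [apply Rabs_pos|lra]).
      assert (0 <= a * (cmu HOmega mu X B - c)) by (apply Rmult_le_pos; lra). lra.
    - specialize (hmi eq_refl).
      assert (h := Hl (fun y => y < c) (ex_intro _ c (fun y hy => hy))).
      eapply filter_imp; [|exact h]. intros mu hb. simpl in hb.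
      assert (0 <= Rabs a * dl) by (apply Rmult_le_pos; [apply Rabs_pos|lra]).
      assert (0 <= a * (cmu HOmega mu X B - c)) by nra. lra. }
  destruct (filter_ex _ (filter_and _ _ Hval HU)) as [mu [hv hb]].
  set (g' := fun w => sumL s (fun t => snd (fst t) * indic (snd (fst (fst t))) w *
      (fst (fst (fst t)) w - cmu HOmega mu (fst (fst (fst t))) (snd (fst (fst t)))))).
  assert (Hg0 : Em mu g' = 0).
  { unfold g'. rewrite (Em_sumL mu s (fun t w => snd (fst t) * indic (snd (fst (fst t))) w *
      (fst (fst (fst t)) w - cmu HOmega mu (fst (fst (fst t))) (snd (fst (fst t)))))).
    rewrite <- (sumL_zero s). apply sumL_ext. intros t _. apply cmu_term0; exact hv. }
  destruct (Em_exists mu g' hv (Req_le _ _ (eq_sym Hg0))) as [w hw].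
  exists w. rewrite gain_sumL.
  assert (Hle : sumL s (fun t => snd (fst t) * indic (snd (fst (fst t))) w *
      (fst (fst (fst t)) w - cmu HOmega mu (fst (fst (fst t))) (snd (fst (fst t)))) + (- dl) * Rabs (snd (fst t)))
    <= sumL s (fun t => snd (fst t) * indic (snd (fst (fst t))) w * (fst (fst (fst t)) w - snd t))).
  { apply sumL_le. intros t Ht. specialize (hb t Ht). destruct t as [[[X B] a] c]. simpl in *.
    set (cm := cmu HOmega mu X B) in *.
    assert (h0 : 0 <= Rabs a * dl) by (apply Rmult_le_pos; [apply Rabs_pos|lra]).
    destruct (indic_01 B w) as [e|e]; rewrite e.
    - replace (a * 0 * (X w - cm)) with 0 by ring. replace (a * 0 * (X w - c)) with 0 by ring. lra.
    - replace (a * 1 * (X w - c)) with (a * 1 * (X w - cm) + a * (cm - c)) by ring. lra. }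
  rewrite sumL_plus, sumL_scal in Hle. fold (g' w) in Hle. fold A in Hle. lra.
-
  intros X HDX. unfold Pc. apply ulim_unique; try assumption.
  intros Q HQ. unfold filtermap.
  destruct (P X) as [r| |] eqn:EP; simpl in HQ.
  + destruct HQ as [eps Heps]. destruct (small_inv eps (cond_pos eps)) as [N hN].
    apply sub. exists (X :: nil), N. intros mu hv hc.
    specialize (hc X (or_introl eq_refl) HDX). unfold cond in hc. rewrite EP in hc.
    rewrite cmu_full by exact hv. apply Heps. apply ball_R. lra.
  + destruct HQ as [M HM]. destruct (INR_unbounded M) as [N hN].
    apply sub. exists (X :: nil), N. intros mu hv hc.
    specialize (hc X (or_introl eq_refl) HDX). unfold cond in hc. rewrite EP in hc.
    rewrite cmu_full by exact hv. apply HM. lra.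
  + destruct HQ as [M HM]. destruct (INR_unbounded (- M)) as [N hN].
    apply sub. exists (X :: nil), N. intros mu hv hc.
    specialize (hc X (or_introl eq_refl) HDX). unfold cond in hc. rewrite EP in hc.
    rewrite cmu_full by exact hv. apply HM. lra.
- intros B HB. split; [split; [|split]|].
  + intros X Y _ _ Hle. unfold Pc. apply ulim_le; [exact FU|].
    eapply filter_imp; [|exact Hval]. intros mu hv. apply cmu_mono; assumption.
  + intros X Y a b z _ _ Hz. unfold Pc. apply ulim_unique; try assumption.
    eapply filterlim_ext; [intros mu; symmetry; apply cmu_lin|].
    apply (lim_plus U _ _ _ (Rbar_mult a (Pc X B)) (Rbar_mult b (Pc Y B)) z); [| |exact Hz].
    * apply (lim_scal U _). apply ulim_spec; assumption.
    * apply (lim_scal U _). apply ulim_spec; assumption.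
  + unfold Pc. rewrite (ulim_ext U FU _ (fun _ => 1)) by (intros; apply cmu_one).
    apply ulim_const; assumption.
  + intros X _. unfold Pc. apply ulim_ext; [exact FU|]. intros mu. apply cmu_indic. exact HB.
Qed.
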